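(* Let $S$ be a nonempty set and $X=\ell^{\infty}(S)$ with the sup-norm metric and base point $0$. Then the function identically equal to $0$ is not a metric functional of $X$. In fact, every metric functional of $X$ is an unbounded function.
   Context: For a metric space $(X,d)$ with base point $x_0$, let $\mathrm{Hom}(X,\mathbb{R})$ be the set of $1$-Lipschitz functions $X\to\mathbb{R}$ with the topology of pointwise convergence and $h_y(\cdot)=d(\cdot,y)-d(x_0,y)$ for $y\in X$. Metric functionals are the elements of the closure of $\{h_y:y\in X\}$ in $\mathrm{Hom}(X,\mathbb{R})$. *)

(* Defs.v *)
From HB Require Import structures.
From mathcomp Require Import all_boot all_order all_algebra.
From mathcomp Require Import all_classical all_reals all_analysis.
Set Implicit Arguments. Unset Strict Implicit. Unset Printing Implicit Defensive.
Import Order.TTheory GRing.Theory Num.Theory.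
Local Open Scope classical_set_scope.
Local Open Scope ring_scope.

Record linf (R : realType) (S : Type) := Linf {
  linf_fun :> S -> R;
  linf_bounded : exists M : R, forall s, `|linf_fun s| <= M }.

Definition linf_dist (R : realType) (S : Type) (f g : linf R S) : R :=
  sup [set `|f s - g s| | s in [set: S]].

Lemma linf0_bounded (R : realType) (S : Type) :
  exists M : R, forall s : S, `|(fun _ : S => 0 : R) s| <= M.
Proof. by exists 0 => s; rewrite normr0. Qed.

Definition linf0 (R : realType) (S : Type) : linf R S :=
  @Linf R S (fun _ => 0) (linf0_bounded R S).

Definition lip1 (R : realType) (S : Type) (h : linf R S -> R) : Prop :=
  forall x y, `|h x - h y| <= linf_dist x y.

Definition hfun (R : realType) (S : Type) (y : linf R S) : linf R S -> R :=
  fun x => linf_dist x y - linf_dist (linf0 R S) y.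

(* metric functional: element of Hom(X,R) lying in the closure of {h_y} for
   the topology of pointwise convergence (closure in the subspace Hom(X,R)
   = ambient closure in the product topology intersected with Hom(X,R)). *)
Definition metric_functional (R : realType) (S : Type) (h : linf R S -> R) : Prop :=
  lip1 h /\
  closure ([set hfun y | y in [set: linf R S]] : set {ptws linf R S -> R^o}) h.

Definition unbounded_fun (R : realType) (S : Type) (h : linf R S -> R) : Prop :=
  ~ (exists M : R, forall x, `|h x| <= M).

(* Main.v *)
Require Import Defs.
From HB Require Import structures.
From mathcomp Require Import all_boot all_order all_algebra.
From mathcomp Require Import all_classical all_reals all_analysis.
From mathcomp Require Import lra.
Import Order.TTheory GRing.Theory Num.Theory.
Local Open Scope classical_set_scope.
Local Open Scope ring_scope.

Lemma ptws_nbhs_eval (R : realType) (T : Type) (h : {ptws T -> R^o}) (c : T) (e : R) :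
  0 < e -> nbhs h (fun g : {ptws T -> R^o} => `|h c - g c| < e).
Proof.
move=> e0.
have /cvg_sup/(_ c) H : h --> h by apply: cvg_id.
apply: H.
have := @initial_continuous _ R^o (fun f : T -> R^o => f c) h.
by move=> /cvgr_dist_lt /(_ e e0).
Qed.

Lemma cst_bounded (R : realType) (S : Type) (c : R) :
  exists M : R, forall s : S, `|(fun _ : S => c) s| <= M.
Proof. by exists `|c|. Qed.

Definition cstl (R : realType) (S : Type) (c : R) : linf R S :=
  @Linf R S (fun _ => c) (cst_bounded R S c).
Arguments cstl {R} S c.

Lemma dist_ge (R : realType) (S : Type) (f y : linf R S) (s : S) :
  `|f s - y s| <= linf_dist f y.
Proof.
apply: ub_le_sup; last by exists s.
case: (linf_bounded f) => Mf Hf; case: (linf_bounded y) => My Hy.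
exists (Mf + My) => _ [t _ <-].
apply: (le_trans (ler_normB _ _)); exact: lerD.
Qed.

Arguments dist_ge {R S} f y s.

Lemma dist_le (R : realType) (S : Type) (hS : inhabited S) (f y : linf R S) B :
  (forall s, `|f s - y s| <= B) -> linf_dist f y <= B.
Proof.
move=> HB; case: hS => s0.
apply: ge_sup; first by exists `|f s0 - y s0|, s0.
by move=> _ [t _ <-].
Qed.

Arguments dist_le {R S} hS f y B.

Lemma key (R : realType) (S : Type) (hS : inhabited S) (y : linf R S) (c : R) :
  0 <= c -> c <= hfun y (cstl S c) \/ c <= hfun y (cstl S (- c)).
Proof.
move=> c0; rewrite /hfun.
set d1 := linf_dist (cstl S c) y; set d2 := linf_dist (cstl S (-c)) y.
have : linf_dist (linf0 R S) y <= Num.max d1 d2 - c.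
  apply: dist_le => // s /=.
  have h1 := dist_ge (cstl S c) y s; have h2 := dist_ge (cstl S (-c)) y s.
  rewrite /= -/d1 in h1; rewrite /= -/d2 in h2.
  have m1 : d1 <= Num.max d1 d2 by rewrite le_max lexx.
  have m2 : d2 <= Num.max d1 d2 by rewrite le_max lexx orbT.
  rewrite sub0r normrN.
  have [ys0|ys0] := lerP 0 (y s).
    rewrite ger0_norm //.
    have : `|- c - y s| = c + y s by rewrite -normrN opprB opprK ger0_norm ?addr_ge0 // addrC.
    move=> E; rewrite E in h2; lra.
  rewrite ltr0_norm //.
  have : `|c - y s| = c - y s by rewrite ger0_norm //; lra.
  move=> E; rewrite E in h1; lra.
have [->|->] : Num.max d1 d2 = d1 \/ Num.max d1 d2 = d2.
  by rewrite /Num.max; case: ifP; [right|left].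
  by move=> H; left; lra.
by move=> H; right; lra.
Qed.

Arguments key {R S} hS y c.

Theorem proposition21 (R : realType) (S : Type) (hS : inhabited S) :
  ~ metric_functional (fun _ : linf R S => 0 : R) /\
  (forall h : linf R S -> R, metric_functional h -> unbounded_fun h).
Proof.
have main : forall h : linf R S -> R, metric_functional h -> unbounded_fun h.
  move=> h [_ hcl] [M HM].
  have M0 : 0 <= M by apply: le_trans (HM (linf0 R S)).
  set c := M + 2.
  have c0 : 0 <= c by rewrite /c; lra.
  have cE : c = M + 2 by []. clearbody c.
  have N1 := @ptws_nbhs_eval R (linf R S) h (cstl S c) 1 ltr01.
  have N2 := @ptws_nbhs_eval R (linf R S) h (cstl S (-c)) 1 ltr01.
  have [g [[y _ <-] [H1 H2]]] := hcl _ (filterI N1 N2).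
  have A1 := HM (cstl S c); have A2 := HM (cstl S (-c)).
  have [K|K] := key hS y c c0.
    move: H1 A1 K; generalize (h (cstl S c)) (hfun y (cstl S c)) => a b.
    clear -cE M0 => H0 A1 K.
  have H1 : `|a - b| < 1 by exact: H0.
    move: H1 A1; rewrite ltr_norml ler_norml => /andP[? ?] /andP[? ?]; lra.
  move: H2 A2 K; generalize (h (cstl S (-c))) (hfun y (cstl S (-c))) => a b.
  clear -cE M0 => H0 A1 K.
  have H1 : `|a - b| < 1 by exact: H0.
  move: H1 A1; rewrite ltr_norml ler_norml => /andP[? ?] /andP[? ?]; lra.
split => // H.
by apply: (main _ H); exists 0 => _; rewrite normr0.
Qed.
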